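(* For any $p\in\mathbb{P}^1\setminus\{\infty\}$ there is a sequence $(g_n)_{n}$ in $H(\mathbb{Z})$ such that $g_n q$ converges to $\infty$ uniformly for $q$ in compact subsets of $\mathbb{P}^1\setminus\{p\}$.
   Context: Let $\mathbb{P}^1=\mathbb{P}^1(\mathbb{R})$ with its usual topology (a circle) and the natural action of $\mathrm{PSL}_2(\mathbb{R})$. Let $G$ be the group of homeomorphisms of $\mathbb{P}^1$ which are piecewise in $\mathrm{PSL}_2(\mathbb{R})$ with finitely many pieces, each an interval. Let $\infty\in\mathbb{P}^1$ correspond to the first basis vector of $\mathbb{R}^2$ and $H<G$ its stabilizer. Let $P_{\mathbb{Z}}$ be the set of fixed points of hyperbolic elements (trace of absolute value $>2$) of $\mathrm{PSL}_2(\mathbb{Z})$, $G(\mathbb{Z})$ the subgroup of $G$ of elements piecewise in $\mathrm{PSL}_2(\mathbb{Z})$ with all interval endpoints in $P_{\mathbb{Z}}$, and $H(\mathbb{Z})=G(\mathbb{Z})\cap H$. *)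

(* Defs.v *)
From HB Require Import structures.
From mathcomp Require Import all_boot all_order all_algebra.
From mathcomp Require Import boolp classical_sets reals.
Set Implicit Arguments. Unset Strict Implicit. Unset Printing Implicit Defensive.
Import Order.TTheory GRing.Theory Num.Theory.
Local Open Scope classical_set_scope.
Local Open Scope ring_scope.

(* The projective line P^1(R) in the affine chart: [Some x] is the line of
   (x,1), and [None] is infinity, the line of the first basis vector (1,0). *)
Definition P1 (R : realType) := option R.
Definition infty {R : realType} : P1 R := None.

Definition p1_open (R : realType) (U : set (P1 R)) : Prop :=
  (forall x : R, U (Some x) ->
     exists2 e : R, 0 < e & forall y : R, `|y - x| < e -> U (Some y)) /\
  (U None -> exists M : R, forall y : R, M < `|y| -> U (Some y)).

Definition p1_compact (R : realType) (K : set (P1 R)) : Prop :=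
  forall (I : Type) (V : I -> set (P1 R)),
    (forall i, p1_open (V i)) -> K `<=` \bigcup_(i in setT) V i ->
    exists (n : nat) (F : 'I_n -> I), forall x, K x -> exists j, V (F j) x.

Definition p1_continuous (R : realType) (f : P1 R -> P1 R) : Prop :=
  forall U, p1_open U -> p1_open (f @^-1` U).

Definition p1_homeo (R : realType) (f : P1 R -> P1 R) : Prop :=
  exists g : P1 R -> P1 R,
    [/\ cancel f g, cancel g f, p1_continuous f & p1_continuous g].

(* Integer 2x2 matrices (a, b, c, d) = [[a, b], [c, d]]; SL_2(Z) elements
   represent PSL_2(Z) (M and -M act identically). *)
Definition mat2 := (int * int * int * int)%type.
Definition in_SL2Z (M : mat2) : Prop :=
  let: (a, b, c, d) := M in a * d - b * c = 1.

(* Projective (Moebius) action of M on P^1: [x:y] |-> [ax+by : cx+dy]. *)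
Definition mob (R : realType) (M : mat2) (x : P1 R) : P1 R :=
  let: (a, b, c, d) := M in
  match x with
  | Some t => if c%:~R * t + d%:~R == 0 then None
              else Some ((a%:~R * t + b%:~R) / (c%:~R * t + d%:~R))
  | None => if c == 0 then None else Some (a%:~R / c%:~R)
  end.

Definition hyperbolic (M : mat2) : Prop :=
  let: (a, b, c, d) := M in (2 < `|a + d|)%R.

Definition PZ (R : realType) : set (P1 R) :=
  [set x | exists M : mat2, [/\ in_SL2Z M, hyperbolic M & mob M x = x]].

(* Cyclic order on the circle P^1 = R u {oo}: the linear order on R with oo
   put last, and strict cyclic betweenness. *)
Definition p1lt (R : realType) (x y : P1 R) : bool :=
  match x, y with
  | Some a, Some b => a < b
  | Some _, None => true
  | None, _ => false
  end.

Definition cbetween (R : realType) (a x b : P1 R) : bool :=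
  [|| p1lt a x && p1lt x b, p1lt b a && p1lt a x | p1lt x b && p1lt b a].

(* Closed arc of the circle from a to b (counterclockwise); arc a a = {a}. *)
Definition arc (R : realType) (a b : P1 R) : set (P1 R) :=
  [set x | x = a \/ x = b \/ cbetween a x b].

Definition piecewise_PSL2Z (R : realType) (f : P1 R -> P1 R) : Prop :=
  exists s : seq (P1 R * P1 R * mat2),
    (forall pc, pc \in s ->
       [/\ PZ pc.1.1, PZ pc.1.2, in_SL2Z pc.2 &
           forall x, arc pc.1.1 pc.1.2 x -> f x = mob pc.2 x]) /\
    (forall x : P1 R, exists2 pc, pc \in s & arc pc.1.1 pc.1.2 x).

Definition in_GZ (R : realType) (f : P1 R -> P1 R) : Prop :=
  p1_homeo f /\ piecewise_PSL2Z f.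

Definition in_HZ (R : realType) (f : P1 R -> P1 R) : Prop :=
  in_GZ f /\ f infty = infty.

Definition unif_to_infty_away (R : realType) (p : P1 R)
    (g : nat -> P1 R -> P1 R) : Prop :=
  forall K : set (P1 R), p1_compact K -> ~ K p ->
  forall U : set (P1 R), p1_open U -> U infty ->
  exists N : nat, forall n, (N <= n)%N -> forall q, K q -> U (g n q).

(* Main.v *)
Require Import Defs.
From HB Require Import structures.
From mathcomp Require Import all_boot all_order all_algebra.
From mathcomp Require Import boolp classical_sets reals.
From mathcomp Require Import ring lra zify.
Set Implicit Arguments. Unset Strict Implicit. Unset Printing Implicit Defensive.
Import Order.TTheory GRing.Theory Num.Theory.
Local Open Scope classical_set_scope.
Local Open Scope ring_scope.

Section Gen.
Variable R : realType.
Implicit Types (x y : R) (f g : R -> R).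

Definition liftp (f : R -> R) : P1 R -> P1 R :=
  fun q => match q with None => None | Some x => Some (f x) end.

Definition sinc f := forall x y, x < y -> f x < f y.

Lemma sinc_le f : sinc f -> forall x y, x <= y -> f x <= f y.
Proof.
move=> hf x y; rewrite le_eqVlt => /orP[/eqP->//|/hf/ltW//].
Qed.

Lemma sinc_inv f x y : sinc f -> f x < f y -> x < y.
Proof.
move=> hf h; case: (ltP x y) => // yx.
by have := sinc_le hf yx; rewrite leNgt h.
Qed.

Lemma lift_cont f g : sinc f -> cancel g f -> p1_continuous (liftp f).
Proof.
move=> hf gK U [U1 U2]; split.
- move=> x /= Ux; have [e e0 He] := U1 _ Ux.
  set y1 := g (f x - e / 2); set y2 := g (f x + e / 2).
  have fy1 : f y1 = f x - e / 2 by rewrite /y1 gK.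
  have fy2 : f y2 = f x + e / 2 by rewrite /y2 gK.
  have y1x : y1 < x by apply: (sinc_inv hf); rewrite fy1; lra.
  have y2x : x < y2 by apply: (sinc_inv hf); rewrite fy2; lra.
  exists (Num.min (x - y1) (y2 - x)).
    by rewrite lt_min; apply/andP; split; lra.
  move=> y; rewrite lt_min => /andP[]; rewrite !ltr_norml => /andP[h1 h2] /andP[h3 h4].
  apply: He.
  have a1 : f y1 < f y by apply: hf; lra.
  have a2 : f y < f y2 by apply: hf; lra.
  rewrite ltr_norml; apply/andP; split; lra.
- move=> /= UN; have [M HM] := U2 UN.
  set m := `|M| + 1.
  set x1 := g (- m); set x2 := g m.
  have fx1 : f x1 = - m by rewrite /x1 gK.
  have fx2 : f x2 = m by rewrite /x2 gK.
  exists (`|x1| + `|x2|) => y hy /=; apply: HM.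
  have hM := ler_norm M. have hM2 : - M <= `|M| by rewrite -normrN ler_norm.
  case: (ltP x2 y) => [h|h].
    have := hf _ _ h; rewrite fx2 => hh.
    have := ler_norm (f y); rewrite /m in hh; lra.
  case: (ltP y x1) => [h'|h'].
    have := hf _ _ h'; rewrite fx1 => hh.
    have : - f y <= `|f y| by rewrite -normrN ler_norm.
    rewrite /m in hh; lra.
  exfalso. 
  have n1 := normr_ge0 x1; have n2 := normr_ge0 x2.
  have n3 := ler_norm x2.
  have n4 : - x1 <= `|x1| by rewrite -normrN ler_norm.
  case: (lerP 0 y) => y0.
    by rewrite (ger0_norm y0) in hy; lra.
  by rewrite (ltr0_norm y0) in hy; lra.
Qed.

Lemma sinc_can f g : sinc f -> cancel f g -> cancel g f -> sinc g.
Proof.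
move=> hf fK gK x y xy; apply: (sinc_inv hf); by rewrite !gK.
Qed.

Lemma lift_homeo f g : sinc f -> cancel f g -> cancel g f -> p1_homeo (liftp f).
Proof.
move=> hf fK gK; exists (liftp g); split.
- by case=> //= x; rewrite fK.
- by case=> //= x; rewrite gK.
- exact: lift_cont hf gK.
- exact: lift_cont (sinc_can hf fK gK) fK.
Qed.

Lemma compact_away (K : set (P1 R)) (p : R) :
  p1_compact K -> ~ K (Some p) ->
  exists2 e : R, 0 < e & forall y, K (Some y) -> e <= `|y - p|.
Proof.
move=> hK hp.
pose V (k : nat) : set (P1 R) := fun q => match q with
  None => True | Some y => (k.+1%:R)^-1 < `|y - p| end.
have Vo : forall k, p1_open (V k).
  move=> k; rewrite /V.
  have r1 : (k.+1%:R)^-1 <= (1 : R) by rewrite invf_le1 ?ltr0Sn // ler1n.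
  move: ((k.+1%:R)^-1) r1 => r r1.
  split.
  - move=> x /= hx; exists (`|x - p| - r); first lra.
    move=> y hy /=.
    have h1 := ler_distD y x p. rewrite distrC in hy. lra.
  - move=> _; exists (`|p| + 1) => y hy /=.
    have h1 := lerB_dist y p.
    lra.
have cov : K `<=` \bigcup_(i in setT) V i.
  case=> [y|] Ky; last by exists 0%N.
  have yp : 0 < `|y - p|.
    rewrite normr_gt0 subr_eq0; apply/eqP => e; by rewrite e in Ky.
  exists (Num.Def.archi_bound (`|y - p|^-1)) => //; rewrite /V /=.
  have hh : 0 <= `|y - p|^-1 by rewrite invr_ge0 ltW.
  have := archi_boundP hh.
  set k := Num.Def.archi_bound _ => hk.
  rewrite -(invrK (`|y - p|)) ltf_pV2 ?posrE ?ltr0Sn ?invr_gt0 //.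
  by apply: lt_le_trans hk _; rewrite ler_nat.
have [n [F HF]] := hK nat V Vo cov.
set m := (\max_(j < n) F j)%N.
exists ((m.+1%:R)^-1); first by rewrite invr_gt0 ltr0Sn.
move=> y Ky; have [j Vj] := HF _ Ky; move: Vj; rewrite /V /= => Vj.
apply/ltW/(le_lt_trans _ Vj).
rewrite lef_pV2 ?posrE ?ltr0Sn // ler_nat ltnS.
exact: leq_bigmax.
Qed.


Definition glue (e : R) f1 f2 x := if x <= e then f1 x else f2 x.

Lemma glue_sinc lo e f1 f2 :
  (forall x y, lo <= x -> x < y -> y <= e -> f1 x < f1 y) ->
  (forall x y, e <= x -> x < y -> f2 x < f2 y) -> f1 e = f2 e ->
  forall x y, lo <= x -> x < y -> glue e f1 f2 x < glue e f1 f2 y.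
Proof.
move=> h1 h2 he x y lx xy; rewrite /glue.
case: (lerP y e) => ye.
  by rewrite (le_trans (ltW xy) ye); apply: h1.
case: (lerP x e) => xe.
  apply: (@le_lt_trans _ _ (f1 e)); last by rewrite he; apply: h2.
  move: xe; rewrite le_eqVlt => /orP[/eqP->//|xe].
  exact/ltW/h1.
by apply: h2 => //; apply: ltW.
Qed.

Lemma glue_can lo e f1 f2 g1 g2 : lo <= e ->
  (forall x, lo < x -> x <= e -> [/\ lo < g1 x, g1 x <= e & f1 (g1 x) = x]) ->
  (forall x, e < x -> e < g2 x /\ f2 (g2 x) = x) ->
  forall x, lo < x -> lo < glue e g1 g2 x /\ glue e f1 f2 (glue e g1 g2 x) = x.
Proof.
move=> le h1 h2 x lx; rewrite /glue.
case: (lerP x e) => xe.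
  by have [a b c] := h1 _ lx xe; rewrite b.
have [a b] := h2 _ xe; split; first exact: le_lt_trans le a.
by rewrite leNgt a.
Qed.

Definition good (a c : R) f g :=
  [/\ f a = a, f c = c,
      (forall x y, a <= x -> x < y -> y <= c -> f x < f y) &
      forall x, a <= x <= c -> g (f x) = x].

Lemma good_in a c f g x : a <= c -> good a c f g -> a <= x <= c -> a <= f x <= c.
Proof.
move=> ac [fa fc hf _] /andP[ax xc]; apply/andP; split.
  move: ax; rewrite le_eqVlt => /orP[/eqP<-|ax]; first by rewrite fa.
  by rewrite -{1}fa; apply/ltW/hf.
move: xc; rewrite le_eqVlt => /orP[/eqP->|xc]; first by rewrite fc.
by rewrite -fc; apply/ltW/hf.
Qed.

Lemma good_in_lt a c f g x : a <= c -> good a c f g -> a < x <= c -> a < f x.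
Proof.
move=> ac [fa fc hf _] /andP[ax xc]; by rewrite -{1}fa; apply: hf.
Qed.

Definition bump a c c' b f1 f2 :=
  glue a id (glue c f1 (glue c' id (glue b f2 id))).

Lemma bump_sinc a c c' b f1 f2 g1 g2 : a < c -> c <= c' -> c' < b ->
  good a c f1 g1 -> good c' b f2 g2 -> sinc (bump a c c' b f1 f2).
Proof.
move=> ac cc cb [f1a f1c h1 _] [f2a f2c h2 _] x y xy.
have L4 : forall u v, c' <= u -> u < v -> glue b f2 id u < glue b f2 id v.
  apply: glue_sinc; [exact: h2 | by move=> u v _ -> | by rewrite f2c].
have L3 : forall u v, c <= u -> u < v ->
    glue c' id (glue b f2 id) u < glue c' id (glue b f2 id) v.
  apply: glue_sinc; [by move=> u v _ -> | exact: L4 | by rewrite /glue (ltW cb) f2a].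
have L2 : forall u v, a <= u -> u < v ->
    glue c f1 (glue c' id (glue b f2 id)) u < glue c f1 (glue c' id (glue b f2 id)) v.
  apply: glue_sinc; [exact: h1 | exact: L3 | by rewrite /glue cc f1c].
apply: (@glue_sinc x); [by move=> u v _ -> | exact: L2 | by rewrite /glue (ltW ac) f1a | exact: lexx | exact: xy].
Qed.

Lemma bump_can a c c' b f1 f2 g1 g2 : a < c -> c <= c' -> c' < b ->
  good a c f1 g1 -> good a c g1 f1 -> good c' b f2 g2 -> good c' b g2 f2 ->
  cancel (bump a c c' b g1 g2) (bump a c c' b f1 f2).
Proof.
move=> ac cc cb G1 G1' G2 G2' x.
have [g1a g1c hg1 g1K] := G1'.
have [g2a g2c hg2 g2K] := G2'.
have M4 : forall z, c' < z -> c' < glue b g2 id z /\ glue b f2 id (glue b g2 id z) = z.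
  apply: (glue_can (ltW cb)); last by move=> z zb.
  move=> w h1 h2; split.
  - by apply: (good_in_lt (ltW cb) G2'); rewrite h1 h2.
  - have hh : c' <= w <= b by rewrite h2 (ltW h1).
    by case/andP: (good_in (ltW cb) G2' hh).
  - by apply: g2K; rewrite h2 (ltW h1).
have M3 : forall z, c < z -> c < glue c' id (glue b g2 id) z /\
     glue c' id (glue b f2 id) (glue c' id (glue b g2 id) z) = z.
  apply: (glue_can cc); first by move=> w h1 h2.
  move=> w h; have [h1 h2] := M4 _ h; split => //.
have M2 : forall z, a < z -> a < glue c g1 (glue c' id (glue b g2 id)) z /\
     glue c f1 (glue c' id (glue b f2 id)) (glue c g1 (glue c' id (glue b g2 id)) z) = z.
  apply: (glue_can (ltW ac)).
  - move=> w h1 h2; split.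
    + by apply: (good_in_lt (ltW ac) G1'); rewrite h1 h2.
    + have hh : a <= w <= c by rewrite h2 (ltW h1).
      by case/andP: (good_in (ltW ac) G1' hh).
    + by apply: g1K; rewrite h2 (ltW h1).
  - move=> w h; have [h1 h2] := M3 _ h; split => //; exact: lt_trans h1.
have M1 := @glue_can (Num.min (x - 1) a) a id (glue c f1 (glue c' id (glue b f2 id))) id
     (glue c g1 (glue c' id (glue b g2 id))).
rewrite /bump; apply: (proj2 (M1 _ _ _ x _)).
- by rewrite ge_min lexx orbT.
- by move=> y h1 h2; split.
- exact: M2.
- by rewrite gt_min ltrBlDr ltrDl ltr01.
Qed.


Definition mobR (A B C D x : R) := (A * x + B) / (C * x + D).

Lemma mobR_sub A B C D x y : A * D - B * C = 1 -> C * x + D != 0 -> C * y + D != 0 ->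
  mobR A B C D y - mobR A B C D x = (y - x) / ((C * x + D) * (C * y + D)).
Proof.
move=> det hx hy; rewrite /mobR.
have -> : (A * y + B) / (C * y + D) - (A * x + B) / (C * x + D) =
   ((A * D - B * C) * (y - x)) / ((C * x + D) * (C * y + D)) by field; rewrite hx hy.
by rewrite det mul1r.
Qed.

Lemma mobR_fix A B C D a : C * a ^+ 2 + (D - A) * a - B = 0 -> C * a + D != 0 ->
  mobR A B C D a = a.
Proof.
move=> hf hd; have e : A * a + B = a * (C * a + D) - (C * a ^+ 2 + (D - A) * a - B) by ring.
by rewrite hf subr0 in e; rewrite /mobR e mulfK.
Qed.

Lemma mobR_K A B C D x : A * D - B * C = 1 -> C * x + D != 0 ->
  mobR D (- B) (- C) A (mobR A B C D x) = x.
Proof.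
move=> det hx; rewrite /mobR.
have e1 : D * ((A * x + B) / (C * x + D)) + - B = ((A * D - B * C) * x) / (C * x + D) by field.
have e2 : - C * ((A * x + B) / (C * x + D)) + A = (A * D - B * C) / (C * x + D) by field.
rewrite e1 e2 det mul1r; field.
by rewrite hx.
Qed.

Lemma piece1 (A B C D a c : R) :
  A * D - B * C = 1 -> a < c ->
  C * a ^+ 2 + (D - A) * a - B = 0 -> C * c ^+ 2 + (D - A) * c - B = 0 ->
  0 < (C * a + D) * (C * c + D) ->
  (forall x, a <= x <= c -> 0 < (C * x + D) * (C * a + D)) /\
  good a c (mobR A B C D) (mobR D (- B) (- C) A).
Proof.
move=> det ac fa fc P.
have da : C * a + D != 0.
  by apply/eqP => e; move: P; rewrite e mul0r ltxx.
have sgn : forall x, a <= x <= c -> 0 < (C * x + D) * (C * a + D).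
  move=> x /andP[ax xc].
  have id : (c - a) * ((C * x + D) * (C * a + D)) =
     (c - x) * (C * a + D) ^+ 2 + (x - a) * ((C * a + D) * (C * c + D)) by ring.
  have s2 : 0 < (C * a + D) ^+ 2 by rewrite lt_def sqr_ge0 sqrf_eq0 da.
  have h : 0 < (c - x) * (C * a + D) ^+ 2 + (x - a) * ((C * a + D) * (C * c + D)).
    move: xc; rewrite le_eqVlt => /orP[/eqP->|xc].
      by rewrite subrr mul0r add0r mulr_gt0 // subr_gt0.
    apply: ltr_pwDl; first by rewrite mulr_gt0 // subr_gt0.
    by rewrite mulr_ge0 // ?subr_ge0 // ltW.
  by rewrite -id pmulr_rgt0 // subr_gt0 in h.
have nz : forall x, a <= x <= c -> C * x + D != 0.
  move=> x hx; apply/eqP => e; by move: (sgn _ hx); rewrite e mul0r ltxx.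
split => //; split.
- apply: mobR_fix => //; exact: da.
- apply: mobR_fix => //; apply: nz; by rewrite lexx ltW.
- move=> x y ax xy yc.
  have hx : a <= x <= c by rewrite ax (le_trans (ltW xy) yc).
  have hy : a <= y <= c by rewrite yc (le_trans ax (ltW xy)).
  rewrite -subr_gt0 mobR_sub //; try exact: nz.
  apply: divr_gt0; first by rewrite subr_gt0.
  have := mulr_gt0 (sgn _ hx) (sgn _ hy).
  have -> : (C * x + D) * (C * a + D) * ((C * y + D) * (C * a + D)) =
    (C * x + D) * (C * y + D) * (C * a + D) ^+ 2 by ring.
  by rewrite pmulr_lgt0 // lt_def sqr_ge0 sqrf_eq0 da.
- move=> x hx; apply: mobR_K => //; exact: nz.
Qed.

Lemma piece_inv (A B C D a c : R) :
  A * D - B * C = 1 ->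
  C * a ^+ 2 + (D - A) * a - B = 0 -> C * c ^+ 2 + (D - A) * c - B = 0 ->
  0 < (C * a + D) * (C * c + D) ->
  [/\ D * A - (- B) * (- C) = 1,
      (- C) * a ^+ 2 + (A - D) * a - (- B) = 0,
      (- C) * c ^+ 2 + (A - D) * c - (- B) = 0 &
      0 < ((- C) * a + A) * ((- C) * c + A)].
Proof.
move=> det fa fc P; split.
- by rewrite mulrNN [D * A]mulrC.
- by rewrite -[RHS]oppr0 -fa; ring.
- by rewrite -[RHS]oppr0 -fc; ring.
have ea : ((- C) * a + A) * (C * a + D) = 1.
  have -> : ((- C) * a + A) * (C * a + D) = (A * D - B * C) - C * (C * a ^+ 2 + (D - A) * a - B) by ring.
  by rewrite fa mulr0 subr0.
have ec : ((- C) * c + A) * (C * c + D) = 1.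
  have -> : ((- C) * c + A) * (C * c + D) = (A * D - B * C) - C * (C * c ^+ 2 + (D - A) * c - B) by ring.
  by rewrite fc mulr0 subr0.
have : 0 < (((- C) * a + A) * ((- C) * c + A)) * ((C * a + D) * (C * c + D)).
  have -> : (((- C) * a + A) * ((- C) * c + A)) * ((C * a + D) * (C * c + D)) =
     (((- C) * a + A) * (C * a + D)) * (((- C) * c + A) * (C * c + D)) by ring.
  by rewrite ea ec mulr1 ltr01.
by rewrite pmulr_lgt0.
Qed.

Lemma piece (A B C D a c : R) :
  A * D - B * C = 1 -> a < c ->
  C * a ^+ 2 + (D - A) * a - B = 0 -> C * c ^+ 2 + (D - A) * c - B = 0 ->
  0 < (C * a + D) * (C * c + D) ->
  [/\ (forall x, a <= x <= c -> C * x + D != 0),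
      good a c (mobR A B C D) (mobR D (- B) (- C) A) &
      good a c (mobR D (- B) (- C) A) (mobR A B C D)].
Proof.
move=> det ac fa fc P.
have [s1 g1] := piece1 det ac fa fc P.
have [det' fa' fc' P'] := piece_inv det fa fc P.
have [_ g2] := piece1 det' ac fa' fc' P'.
rewrite !opprK in g2; split => // x hx; apply/eqP => e.
by move: (s1 _ hx); rewrite e mul0r ltxx.
Qed.


Section BumpE.
Variables (a c c' b : R) (f1 f2 g1 g2 : R -> R).
Hypotheses (ac : a < c) (cc : c < c') (cb : c' < b).
Hypotheses (G1 : good a c f1 g1) (G2 : good c' b f2 g2).
Let phi := bump a c c' b f1 f2.

Lemma bumpE1 y : y <= a -> phi y = y.
Proof. by move=> h; rewrite /phi /bump /glue h. Qed.

Lemma bumpE2 y : a <= y <= c -> phi y = f1 y.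
Proof.
case: G1 => f1a _ _ _ /andP[ay yc]; rewrite /phi /bump /glue.
case: ifP => [ya|_]; last by rewrite yc.
by have -> : y = a by apply/eqP; rewrite eq_le ya ay.
Qed.

Lemma bumpE3 y : c <= y <= c' -> phi y = y.
Proof.
case: G1 => _ f1c _ _ /andP[cy yc]; rewrite /phi /bump /glue /=.
have -> : (y <= a) = false by apply/negbTE; rewrite -ltNge; exact: lt_le_trans ac cy.
case: ifP => [ya|_]; last by rewrite yc.
by have -> : y = c by apply/eqP; rewrite eq_le ya cy.
Qed.

Lemma bumpE4 y : c' <= y <= b -> phi y = f2 y.
Proof.
case: G2 => f2a _ _ _ /andP[cy yb]; rewrite /phi /bump /glue /=.
have -> : (y <= a) = false.
  by apply/negbTE; rewrite -ltNge; apply: lt_le_trans cy; exact: lt_trans ac cc.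
have -> : (y <= c) = false by apply/negbTE; rewrite -ltNge; exact: lt_le_trans cc cy.
case: ifP => [ya|_]; last by rewrite yb.
by have -> : y = c' by apply/eqP; rewrite eq_le ya cy.
Qed.

Lemma bumpE5 y : b <= y -> phi y = y.
Proof.
case: G2 => _ f2b _ _ hb; rewrite /phi /bump /glue /=.
have cb' : c < b := lt_trans cc cb.
have -> : (y <= a) = false.
  by apply/negbTE; rewrite -ltNge; apply: lt_le_trans hb; exact: lt_trans ac cb'.
have -> : (y <= c) = false by apply/negbTE; rewrite -ltNge; exact: lt_le_trans cb' hb.
have -> : (y <= c') = false by apply/negbTE; rewrite -ltNge; exact: lt_le_trans cb hb.
case: ifP => [ya|_] //.
by have -> : y = b by apply/eqP; rewrite eq_le ya hb.
Qed.
End BumpE.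

Lemma arc_inE (u v y : R) : u < v -> Defs.arc (Some u) (Some v) (Some y) <-> u <= y <= v.
Proof.
move=> uv; rewrite /Defs.arc /cbetween /=; split.
- case=> [[->]|[[->]|/or3P[]/andP[h1 h2]]]; apply/andP; split; lra.
- move=> /andP[h1 h2].
  case: (ltgtP u y) => [uy|yu|<-]; last by left.
  + case: (ltgtP y v) => [yv|vy|->]; last by right; left.
    * by right; right.
    * lra.
  + lra.
Qed.

Lemma arc_in_None (u v : R) : u < v -> ~ Defs.arc (Some u) (Some v) None.
Proof.
move=> uv; rewrite /Defs.arc /cbetween /=; case=> [//|[//|]].
rewrite /= andbT orbF => h; lra.
Qed.

Lemma arc_outE (u v y : R) : u < v -> Defs.arc (Some v) (Some u) (Some y) <-> (y <= u \/ v <= y).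
Proof.
move=> uv; rewrite /Defs.arc /cbetween /=; split.
- case=> [[->]|[[->]|/or3P[]/andP[h1 h2]]].
  + by right.
  + by left.
  + lra.
  + right; lra.
  + left; lra.
- case=> h.
  + case: (ltgtP y u) => [yu|uy|->]; last by right; left.
    * by right; right => /=; rewrite ?yu ?uy ?vy ?yv ?uv ?orbT.
    * lra.
  + case: (ltgtP v y) => [vy|yv|->]; last by left.
    * by right; right => /=; rewrite ?yu ?uy ?vy ?yv ?uv ?orbT.
    * lra.
Qed.

Lemma arc_out_None (u v : R) : u < v -> Defs.arc (Some v) (Some u) None.
Proof. by move=> uv; right; right; rewrite /cbetween /= uv. Qed.


End Gen.


Section Gen2.
Variable R : realType.
Implicit Types (x y : R) (f g : R -> R).
Definition mobRM (M : mat2) (x : R) : R :=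
  let: (a, b, c, d) := M in mobR a%:~R b%:~R c%:~R d%:~R x.
Definition denM (M : mat2) (x : R) : R :=
  let: (a, b, c, d) := M in c%:~R * x + d%:~R.

Lemma mob_Some (M : mat2) (x : R) : denM M x != 0 -> mob M (Some x) = Some (mobRM M x).
Proof. by case: M => [[[a b] c] d] /= h; rewrite (negbTE h). Qed.

Definition id2 : mat2 := (1, 0, 0, 1)%R.

Lemma mob_id (q : P1 R) : mob id2 q = q.
Proof.
case: q => [x|] //=.
by rewrite mul0r add0r oner_eq0 mul1r addr0 divr1.
Qed.

Lemma id2_SL : in_SL2Z id2.
Proof. by []. Qed.

Lemma bump_HZ (M1 M2 : mat2) (a c c' b : R) g1 g2 :
  a < c -> c < c' -> c' < b ->
  PZ (Some a) -> PZ (Some c) -> PZ (Some c') -> PZ (Some b) ->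
  in_SL2Z M1 -> in_SL2Z M2 ->
  (forall x, a <= x <= c -> denM M1 x != 0) -> (forall x, c' <= x <= b -> denM M2 x != 0) ->
  good a c (mobRM M1) g1 -> good a c g1 (mobRM M1) ->
  good c' b (mobRM M2) g2 -> good c' b g2 (mobRM M2) ->
  in_HZ (liftp (bump a c c' b (mobRM M1) (mobRM M2))).
Proof.
move=> ac cc cb Pa Pc Pc' Pb S1 S2 d1 d2 G1 G1' G2 G2'.
split; last by [].
split.
  apply: (lift_homeo (g := bump a c c' b g1 g2)).
  - exact: (bump_sinc ac (ltW cc) cb G1 G2).
  - exact: (bump_can ac (ltW cc) cb G1' G1 G2' G2).
  - exact: (bump_can ac (ltW cc) cb G1 G1' G2 G2').
have cb' : c < b := lt_trans cc cb.
have ab : a < b := lt_trans ac cb'.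
exists [:: (Some b, Some a, id2); (Some a, Some c, M1); (Some c, Some c', id2); (Some c', Some b, M2)].
split.
- move=> pc; rewrite !inE => /or4P[]/eqP->; split => //; try exact: id2_SL; move=> [y|] h.
  + rewrite mob_id /=; congr Some.
    case/(arc_outE y ab): h => h; first by rewrite bumpE1.
    exact: (bumpE5 _ ac cc cb G2).
  + by rewrite mob_id.
  + have hy := (arc_inE y ac).1 h.
    by rewrite mob_Some ?d1 //= (bumpE2 _ _ _ G1).
  + by case: (arc_in_None ac).
  + rewrite mob_id /=; congr Some.
    exact: (bumpE3 _ _ ac G1 ((arc_inE y cc).1 h)).
  + by rewrite mob_id.
  + have hy := (arc_inE y cb).1 h.
    by rewrite mob_Some ?d2 //= (bumpE4 _ ac cc G2).
  + by case: (arc_in_None cb).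
- case=> [y|]; last first.
    by exists (Some b, Some a, id2); rewrite ?inE ?eqxx //=; apply: arc_out_None.
  case: (lerP y a) => ya.
    exists (Some b, Some a, id2); rewrite ?inE ?eqxx //=.
    by apply/(arc_outE y ab); left.
  case: (lerP y c) => yc.
    exists (Some a, Some c, M1); rewrite ?inE ?eqxx ?orbT //=.
    by apply/(arc_inE y ac); rewrite yc ltW.
  case: (lerP y c') => yc'.
    exists (Some c, Some c', id2); rewrite ?inE ?eqxx ?orbT //=.
    by apply/(arc_inE y cc); rewrite yc' ltW.
  case: (lerP y b) => yb.
    exists (Some c', Some b, M2); rewrite ?inE ?eqxx ?orbT //=.
    by apply/(arc_inE y cb); rewrite yb ltW.
  exists (Some b, Some a, id2); rewrite ?inE ?eqxx //=.
  by apply/(arc_outE y ab); right; apply: ltW.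
Qed.

End Gen2.

Definition Kmat (J N t : int) : mat2 :=
  (J * N - 1 - t * (N * N), t * (J * N + 1) - J * J, N * N, - (J * N + 1))%R.

Lemma eq_good (R : realType) (a c : R) f f' g g' : good a c f g ->
  (forall x, f x = f' x) -> (forall x, g x = g' x) -> good a c f' g'.
Proof.
move=> G ef eg.
have -> : f' = f by apply/funext => x; rewrite ef.
by have -> : g' = g by apply/funext => x; rewrite eg.
Qed.

Section K.
Variable R : realType.
Variables (J N t : int).
Let j : R := J%:~R.
Let n : R := N%:~R.
Let tr : R := t%:~R.
Hypothesis n0 : 0 < n.

Lemma K_SL : in_SL2Z (Kmat J N t).
Proof. rewrite /=; ring. Qed.

Lemma K_mobRM x : mobRM (Kmat J N t) x =
  mobR (j * n - 1 - tr * (n * n)) (tr * (j * n + 1) - j * j) (n * n) (- (j * n + 1)) x.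
Proof. by rewrite /mobRM /Kmat !(intrD, intrM, intrN, intrB, mulr1z). Qed.

Lemma K_denM x : denM (Kmat J N t) x = n * n * x + - (j * n + 1).
Proof. by rewrite /denM /Kmat !(intrD, intrM, intrN, intrB, mulr1z). Qed.

Lemma K_val x : (n * n) * x + - (j * n + 1) != 0 ->
  mobRM (Kmat J N t) x = j / n - (n * n)^-1 - tr - ((n * n) * ((n * n) * x + - (j * n + 1)))^-1.
Proof.
move=> hw; have nn : n != 0 by rewrite gt_eqF.
rewrite K_mobRM /mobR; field.
by rewrite hw nn.
Qed.

Let disc := tr ^+ 2 * n ^+ 2 + 4 * tr.
Hypothesis dpos : 0 < disc.
Let q := Num.sqrt disc.
Let zm := (- (tr * n) - q) / 2.
Let zp := (- (tr * n) + q) / 2.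
Let lo := (j + zm) / n.
Let hi := (j + zp) / n.
Hypothesis sgn : 0 < (n * zm - 1) * (n * zp - 1).
Hypothesis hyp : hyperbolic (Kmat J N t).

Lemma K_fix z : z ^+ 2 + tr * n * z - tr = 0 ->
  (n * n) * ((j + z) / n) ^+ 2 + (- (j * n + 1) - (j * n - 1 - tr * (n * n))) * ((j + z) / n)
   - (tr * (j * n + 1) - j * j) = 0.
Proof.
move=> hz; rewrite -[RHS]hz.
have nn : n != 0 by rewrite gt_eqF.
field.
exact: nn.
Qed.

Lemma K_den z : (n * n) * ((j + z) / n) + - (j * n + 1) = n * z - 1.
Proof. have nn : n != 0 by rewrite gt_eqF. by field. Qed.

Lemma roots : zm ^+ 2 + tr * n * zm - tr = 0 /\ zp ^+ 2 + tr * n * zp - tr = 0.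
Proof.
have qq : q ^+ 2 = disc by rewrite sqr_sqrtr // ltW.
split.
- have -> : zm ^+ 2 + tr * n * zm - tr = (q ^+ 2 - disc) / 4 by rewrite /zm /disc; field.
  by rewrite qq subrr mul0r.
- have -> : zp ^+ 2 + tr * n * zp - tr = (q ^+ 2 - disc) / 4 by rewrite /zp /disc; field.
  by rewrite qq subrr mul0r.
Qed.


Lemma K_all : [/\ lo < hi, PZ (Some lo), PZ (Some hi),
   (forall x, lo <= x <= hi -> denM (Kmat J N t) x != 0) &
   exists g, good lo hi (mobRM (Kmat J N t)) g /\ good lo hi g (mobRM (Kmat J N t))].
Proof.
have [rm rp] := roots.
have q0 : 0 < q by rewrite sqrtr_gt0.
have lohi : lo < hi.
  have zz : zm < zp by rewrite /zm /zp; lra.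
  by rewrite /lo /hi ltr_pM2r ?invr_gt0 // ltrD2l.
have det : (j * n - 1 - tr * (n * n)) * (- (j * n + 1)) - (tr * (j * n + 1) - j * j) * (n * n) = 1.
  by ring.
have P : 0 < ((n * n) * lo + - (j * n + 1)) * ((n * n) * hi + - (j * n + 1)).
  by rewrite /lo /hi !K_den.
have [nz G1 G2] := piece det lohi (K_fix rm) (K_fix rp) P.
have PZx : forall z, z ^+ 2 + tr * n * z - tr = 0 -> (n * z - 1 != 0) -> PZ (Some ((j + z) / n)).
  move=> z hz hd; exists (Kmat J N t); split => //; first exact: K_SL.
  rewrite mob_Some; last by rewrite K_denM K_den.
  by rewrite K_mobRM mobR_fix ?K_fix // K_den.
split => //.
- apply: PZx => //; apply/eqP => e; by move: sgn; rewrite e mul0r ltxx.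
- apply: PZx => //; apply/eqP => e; by move: sgn; rewrite e mulr0 ltxx.
- by move=> x hx; rewrite K_denM; apply: nz.
- exists (mobR (- (j * n + 1)) (- (tr * (j * n + 1) - j * j)) (- (n * n)) (j * n - 1 - tr * (n * n))).
  split.
  + by apply: (eq_good G1) => // x; rewrite K_mobRM.
  + by apply: (eq_good G2) => // x; rewrite K_mobRM.
Qed.
End K.

Section Ar.
Variable R : realType.
Implicit Types (n j p d z t s w : R).

Lemma ar_hA n j p d z t : 0 < n -> j <= n * p -> z < - (t * n) -> d <= 1 -> 1 <= t ->
  j + z < (p - d) * n.
Proof. move=> *; have : d * n <= t * n by rewrite ler_pM2r //; lra. lra. Qed.

Lemma ar_hC n j p d z : n * p < j + 1 -> 1 <= n * d -> 0 < z -> (p - d) * n <= j + z.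
Proof. move=> *; lra. Qed.

Lemma ar_w1 n j p d : 0 < n -> n * p < j + 1 -> 1 <= n * d -> (n * n) * (p - d) + - (j * n + 1) <= -1.
Proof.
move=> n0 h1 h2.
have a1 : n * (n * p) <= n * (j + 1) by rewrite ler_pM2l // ltW.
have a2 : n <= n * (n * d) by rewrite ler_peMr // ltW.
have -> : (n * n) * (p - d) + - (j * n + 1) = n * (n * p) - n * (n * d) - j * n - 1 by ring.
lra.
Qed.

Lemma ar_hC' n j p d z : 0 < n -> 3 <= n -> j <= n * p -> n * z < 2 -> 1 <= n * d -> j + z <= (p + d) * n.
Proof.
move=> n0 n3 h1 h2 h3.
have a2 : n <= n * (n * d) by rewrite ler_peMr // ltW.
have : z < n * d by rewrite -(ltr_pM2l n0); lra.
lra.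
Qed.

Lemma ar_hB n j p d z s : 3 <= n -> n * p < j + 1 -> d <= 1 -> 4 <= s -> s * n / 2 <= z ->
  (p + d) * n <= j + z.
Proof.
move=> n3 h1 h2 h3 h4.
have : 4 * n <= s * n by rewrite ler_pM2r //; lra.
have : d * n <= n by rewrite ler_piMl //; lra.
lra.
Qed.

Lemma ar_w2 n j p d : 3 <= n -> j <= n * p -> 1 <= n * d -> 1 <= (n * n) * (p + d) + - (j * n + 1).
Proof.
move=> n3 h1 h2.
have n0 : 0 < n by lra.
have a1 : n * j <= n * (n * p) by rewrite ler_pM2l.
have a2 : n <= n * (n * d) by rewrite ler_peMr // ltW.
have -> : (n * n) * (p + d) + - (j * n + 1) = n * (n * p) + n * (n * d) - j * n - 1 by ring.
lra.
Qed.

Lemma ar_inv n w : 0 < n -> 1 <= w -> ((n * n) * w)^-1 <= (n * n)^-1.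
Proof.
move=> n0 w1; have nn : 0 < n * n by rewrite mulr_gt0.
rewrite lef_pV2 ?posrE ?mulr_gt0 //; last lra.
by rewrite ler_peMr // ltW.
Qed.

Lemma ar_v1 n j p t w M : 0 < n -> j <= n * p -> w <= -1 -> p - t < - M ->
  j / n - (n * n)^-1 - t - ((n * n) * w)^-1 < - M.
Proof.
move=> n0 h1 h2 h3.
have e : ((n * n) * w)^-1 = - ((n * n) * (- w))^-1 by rewrite mulrN invrN opprK.
have b := ar_inv n0 (ltac:(lra) : 1 <= - w).
have jn : j / n <= p by rewrite ler_pdivrMr // mulrC.
rewrite e; lra.
Qed.

Lemma ar_v2 n j p s w M : 3 <= n -> n * p < j + 1 -> 1 <= w -> M < p + s - 1 ->
  M < j / n - (n * n)^-1 - (- s) - ((n * n) * w)^-1.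
Proof.
move=> n3 h1 h2 h3.
have n0 : 0 < n by lra.
have b := ar_inv n0 h2.
have i1 : n^-1 <= 3^-1 by rewrite lef_pV2 ?posrE //; lra.
have i2 : (n * n)^-1 <= 9^-1.
  have h9 : 3 * 3 <= n * n by apply: ler_pM; lra.
  rewrite lef_pV2 ?posrE ?mulr_gt0 //; lra.
have jn : p - n^-1 < j / n.
  rewrite ltr_pdivlMr // mulrBl mulVf ?gt_eqF //; lra.
lra.
Qed.
End Ar.
Section Ar2.
Variable R : realType.
Lemma ar_pt (p K m t : R) : p < K -> t = K + m + 1 -> p - t < - m.
Proof. move=> *; lra. Qed.
Lemma ar_ps (p K m s : R) : - K < p -> s = K + m + 4 -> m < p + s - 1.
Proof. move=> *; lra. Qed.
Lemma ar_fin1 (y p d u v m : R) : y - p < 0 -> d <= - (y - p) -> v < - m -> u <= v ->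
  y <= p - d /\ (u <= v -> m < `|u|).
Proof.
move=> h1 h2 h3 h4; split; first lra.
move=> _; have := ler_norm (- u); rewrite normrN; lra.
Qed.
Lemma ar_fin2 (u v m : R) : m < v -> v <= u -> m < `|u|.
Proof. move=> h1 h2; have := ler_norm u; lra. Qed.
End Ar2.
Section Ar3.
Variable R : realType.
Lemma ar_y1 (y p d : R) : y - p < 0 -> d <= - (y - p) -> y <= p - d.
Proof. move=> *; lra. Qed.
Lemma ar_y2 (y p d : R) : d <= y - p -> p + d <= y.
Proof. move=> *; lra. Qed.
Lemma ar_f1 (u v m : R) : v < - m -> u <= v -> m < `|u|.
Proof. move=> h1 h2; have := ler_norm (- u); rewrite normrN; lra. Qed.
End Ar3.

Lemma lt_sq (R : realType) (X Y : R) : 0 <= Y -> X ^+ 2 < Y ^+ 2 -> X < Y.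
Proof. move=> hY h; case: (ltP X Y) => // hXY. exfalso. nra. Qed.

Lemma hypK (J N t : int) : (1 <= t * (N * N))%R -> hyperbolic (Kmat J N t).
Proof.
move=> h; rewrite /hyperbolic /Kmat.
have -> : J * N - 1 - t * (N * N) + - (J * N + 1) = - (2 + t * (N * N)) by ring.
rewrite normrN ger0_norm; lia.
Qed.

Lemma hypK' (J N t : int) : (5 <= t * (N * N))%R -> hyperbolic (Kmat J N (- t)).
Proof.
move=> h; rewrite /hyperbolic /Kmat.
have -> : J * N - 1 - (- t) * (N * N) + - (J * N + 1) = t * (N * N) - 2 by ring.
rewrite ger0_norm; lia.
Qed.

Section Roots.
Variable R : realType.

Lemma left_roots (n t : R) : 3 <= n -> 1 <= t ->
  let q := Num.sqrt (t ^+ 2 * n ^+ 2 + 4 * t) in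
  let zm := (- (t * n) - q) / 2 in let zp := (- (t * n) + q) / 2 in
  [/\ 0 < t ^+ 2 * n ^+ 2 + 4 * t, zm < - (t * n), 0 < zp, n * zp < 1 &
      0 < (n * zm - 1) * (n * zp - 1)].
Proof.
move=> n3 t1 q zm zp.
have dpos : 0 < t ^+ 2 * n ^+ 2 + 4 * t by nra.
have qq : q ^+ 2 = t ^+ 2 * n ^+ 2 + 4 * t by rewrite sqr_sqrtr // ltW.
have q0 : 0 <= q by rewrite sqrtr_ge0.
have h1 : t * n < q by apply: lt_sq => //; nra.
have h2 : n * q < t * n ^+ 2 + 2 by apply: lt_sq; nra.
have e1 : n * zp = (n * q - t * n ^+ 2) / 2 by rewrite /zp; ring.
have e2 : n * zm = (- (t * n ^+ 2) - n * q) / 2 by rewrite /zm; ring.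
have a1 : n * zp < 1 by rewrite e1; lra.
have a2 : n * zm < 0 by rewrite e2; nra.
split => //.
- rewrite /zm; lra.
- rewrite /zp; lra.
- nra.
Qed.

Lemma right_roots (n s : R) : 3 <= n -> 4 <= s ->
  let q := Num.sqrt ((- s) ^+ 2 * n ^+ 2 + 4 * (- s)) in
  let zm := (- ((- s) * n) - q) / 2 in let zp := (- ((- s) * n) + q) / 2 in
  [/\ 0 < (- s) ^+ 2 * n ^+ 2 + 4 * (- s), 1 < n * zm, n * zm < 2, s * n / 2 <= zp &
      0 < (n * zm - 1) * (n * zp - 1)].
Proof.
move=> n3 s4 q zm zp.
have hn2 : 9 <= n ^+ 2 by nra.
have hsn : 36 <= s * n ^+ 2 by nra.
have dE : (- s) ^+ 2 * n ^+ 2 + 4 * (- s) = s * (s * n ^+ 2 - 4) by ring.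
have dpos : 0 < (- s) ^+ 2 * n ^+ 2 + 4 * (- s) by rewrite dE; nra.
have qq : q ^+ 2 = (- s) ^+ 2 * n ^+ 2 + 4 * (- s) by rewrite sqr_sqrtr // ltW.
have q0 : 0 <= q by rewrite sqrtr_ge0.
have h1 : n * q < s * n ^+ 2 - 2 by apply: lt_sq; nra.
have h2 : s * n ^+ 2 - 4 < n * q by apply: lt_sq; nra.
have e1 : n * zp = (s * n ^+ 2 + n * q) / 2 by rewrite /zp; ring.
have e2 : n * zm = (s * n ^+ 2 - n * q) / 2 by rewrite /zm; ring.
have a1 : 1 < n * zm by rewrite e2; lra.
have a2 : n * zm < 2 by rewrite e2; lra.
have a3 : 1 < n * zp by rewrite e1; nra.
split => //.
- rewrite /zp; have : 0 <= q by []. nra.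
- nra.
Qed.
End Roots.

Section Core.
Variable R : realType.
Variables (p : R) (m : nat).

Lemma core : exists g : P1 R -> P1 R, in_HZ g /\
  forall y, (m.+1%:R)^-1 <= `|y - p| -> exists z, g (Some y) = Some z /\ m%:R < `|z|.
Proof.
pose N : int := (m + 3)%:Z.
pose n : R := N%:~R.
have nE : n = m%:R + 3 by rewrite /n /N -pmulrn natrD.
have n3 : 3 <= n by rewrite nE; have := ler0n R m; lra.
have n0 : 0 < n by lra.
pose J := Num.floor (n * p).
pose j : R := J%:~R.
have jle : j <= n * p := floor_le _.
have jgt : n * p < j + 1 by have := floorD1_gt (n * p); rewrite intrD.
pose K0 := Num.Def.archi_bound `|p|.
have hK0 : `|p| < K0%:R := archi_boundP (normr_ge0 p).
have pK : - K0%:R < p < K0%:R by rewrite -ltr_norml.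
move/andP: pK => [pK1 pK2].
pose T : int := (K0 + m + 1)%:Z.
pose S : int := (K0 + m + 4)%:Z.
pose tT : R := T%:~R.
pose sS : R := S%:~R.
have tTE : tT = K0%:R + m%:R + 1 by rewrite /tT /T -pmulrn !natrD.
have sSE : sS = K0%:R + m%:R + 4 by rewrite /sS /S -pmulrn !natrD.
have K00 := ler0n R K0. have m0 := ler0n R m.
have t1 : 1 <= tT by lra.
have s4 : 4 <= sS by lra.
pose d : R := (m.+1%:R)^-1.
have d0 : 0 < d by rewrite invr_gt0 ltr0Sn.
have nd : 1 <= n * d.
  by rewrite /d nE ler_pdivlMr ?ltr0Sn // mul1r -natr1; lra.
have d1 : d <= 1 by rewrite /d invf_le1 ?ltr0Sn // ler1n.
have [Ld Lzm Lzp Lnzp Lsg] := left_roots n3 t1.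
have hypT : hyperbolic (Kmat J N T).
  apply: hypK; rewrite /T /N -!PoszM lez_nat !muln_gt0 !addn1 !addn3; by [].
have hypS : hyperbolic (Kmat J N (- S)).
  apply: hypK'; rewrite /S /N -!PoszM lez_nat.
  apply: (@leq_trans (1 * (3 * 3))) => //; apply: leq_mul; first by rewrite addn4.
  by apply: leq_mul; rewrite leq_addl.
have [aLc PZa PZc den1 [g1 [G1 G1']]] := @K_all R J N T n0 Ld Lsg hypT.
have [Rd Rzm1 Rzm2 Rzp Rsg] := right_roots n3 s4.
have KR := @K_all R J N (- S) n0.
rewrite !intrN -/sS in KR.
have [aLc' PZa' PZc' den2 [g2 [G2 G2']]] := KR Rd Rsg hypS.
pose q1 := Num.sqrt (tT ^+ 2 * n ^+ 2 + 4 * tT).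
pose zm1 := (- (tT * n) - q1) / 2.
pose zp1 := (- (tT * n) + q1) / 2.
pose q2 := Num.sqrt ((- sS) ^+ 2 * n ^+ 2 + 4 * (- sS)).
pose zm2 := (- ((- sS) * n) - q2) / 2.
pose zp2 := (- ((- sS) * n) + q2) / 2.
pose a := (j + zm1) / n. pose c := (j + zp1) / n.
pose c' := (j + zm2) / n. pose b := (j + zp2) / n.
have ac : a < c := aLc.
have c'b : c' < b := aLc'.
have Lzm' : zm1 < - (tT * n) := Lzm.
have Lzp' : 0 < zp1 := Lzp.
have Lnzp' : n * zp1 < 1 := Lnzp.
have Rzm1' : 1 < n * zm2 := Rzm1.
have Rzm2' : n * zm2 < 2 := Rzm2.
have Rzp' : sS * n / 2 <= zp2 := Rzp.
have cc' : c < c'.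
  rewrite /c /c' ltr_pM2r ?invr_gt0 // ltrD2l -(ltr_pM2l n0); lra.
pose f1 := @mobRM R (Kmat J N T).
pose f2 := @mobRM R (Kmat J N (- S)).
pose phi := bump a c c' b f1 f2.
exists (liftp phi); split.
  exact: (bump_HZ ac cc' c'b PZa PZc PZa' PZc' (K_SL _ _ _) (K_SL _ _ _) den1 den2 G1 G1' G2 G2').
have sphi : sinc phi := bump_sinc ac (ltW cc') c'b G1 G2.
pose x1 := p - d.
have hA : a < x1 by rewrite /a ltr_pdivrMr //; apply: ar_hA Lzm' _ _.
have hC : x1 <= c by rewrite /c ler_pdivlMr //; apply: ar_hC.
have e1 : phi x1 = f1 x1 by apply: (bumpE2 _ _ _ G1); rewrite hC (ltW hA).
have w1n := ar_w1 n0 jgt nd.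
have w1z : (n * n) * x1 + - (j * n + 1) != 0.
  by apply: ltr0_neq0; apply: (le_lt_trans w1n); rewrite ltrN10.
have v1 : phi x1 < - m%:R.
  rewrite e1 /f1 (K_val T n0 w1z).
  apply: (ar_v1 n0 jle w1n); exact: ar_pt pK2 tTE.
pose x2 := p + d.
have hC' : c' <= x2 by rewrite /c' ler_pdivrMr //; apply: ar_hC'.
have hB : x2 <= b by rewrite /b ler_pdivlMr //; apply: ar_hB Rzp'.
have e2 : phi x2 = f2 x2 by apply: (bumpE4 _ ac cc' G2); rewrite hC' hB.
have w2n := ar_w2 n3 jle nd.
have w2z : (n * n) * x2 + - (j * n + 1) != 0.
  by apply: lt0r_neq0; apply: (lt_le_trans ltr01).
have v2 : m%:R < phi x2.
  rewrite e2 /f2 (K_val (- S) n0 w2z) intrN.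
  apply: (ar_v2 n3 jgt w2n); exact: ar_ps pK1 sSE.
move=> y hy; exists (phi y); split => //.
case: (ltP (y - p) 0) => yp.
  rewrite (ltr0_norm yp) in hy.
  apply: (ar_f1 v1); apply: (sinc_le sphi); exact: ar_y1.
rewrite (ger0_norm yp) in hy.
apply: (ar_fin2 v2); apply: (sinc_le sphi); exact: ar_y2.
Qed.
End Core.

Theorem lemma2 (R : realType) (p : R) :
  exists g : nat -> P1 R -> P1 R,
    (forall n, in_HZ (g n)) /\ unif_to_infty_away (Some p) g.
Proof.
have [g hg] := choice (core p).
exists g; split; first by move=> n; have [] := hg n.
move=> K hK hKp U [_ U2] UN.
have [e e0 He] := compact_away hK hKp.
have [M HM] := U2 UN.
pose N0 := maxn (Num.Def.archi_bound (e^-1)) (Num.Def.archi_bound `|M|).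
exists N0 => n hn q Kq.
case: q Kq => [y|] Ky; last first.
  by have [[_ e1] _] := hg n; move: e1; rewrite /infty => ->.
have hy := He _ Ky.
have hn1 : (Num.Def.archi_bound (e^-1) <= n)%N by apply: leq_trans hn; rewrite leq_maxl.
have hn2 : (Num.Def.archi_bound `|M| <= n)%N by apply: leq_trans hn; rewrite leq_maxr.
have ei0 : 0 <= e^-1 by rewrite invr_ge0 ltW.
have ei : e^-1 < n.+1%:R.
  apply: (lt_le_trans (archi_boundP ei0)).
  by rewrite ler_nat (leq_trans hn1).
have hd : (n.+1%:R)^-1 <= `|y - p|.
  apply: (le_trans _ hy); apply: ltW.
  by rewrite -[e]invrK ltf_pV2 ?posrE ?invr_gt0 ?ltr0Sn.
have [z [gz hz]] := (hg n).2 y hd.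
rewrite gz; apply: HM.
have hM : `|M| < n%:R.
  apply: (lt_le_trans (archi_boundP (normr_ge0 M))).
  by rewrite ler_nat.
have := ler_norm M; lra.
Qed.
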